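(* A finitely generated group $G$ admits a regular-preimage left-order if and only if $G$ is trivial.
   Context: A finite generating set of $G$ is a finite set $X$ with a surjective monoid homomorphism $\pi\colon X^*\to G$. For a class $\mathcal{C}$ of languages, a left-order $\prec$ on $G$ with positive cone $P=\{g:1\prec g\}$ is a $\mathcal{C}$-preimage left-order if, for a finite generating set $(X,\pi)$ of $G$, the full preimage $\pi^{-1}(P)\subseteq X^*$ belongs to $\mathcal{C}$. Regular-preimage means $\mathcal{C}$ is the class of languages accepted by finite state automata. *)

(* Defs.v *)
From mathcomp Require Import all_boot.
Set Implicit Arguments. Unset Strict Implicit. Unset Printing Implicit Defensive.

Record group := Group {
  gcar :> Type;
  gmul : gcar -> gcar -> gcar;
  gone : gcar;
  ginv : gcar -> gcar;
  gmulA : forall x y z, gmul x (gmul y z) = gmul (gmul x y) z;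
  gmul1g : forall x, gmul gone x = x;
  gmulVg : forall x, gmul (ginv x) x = gone
}.

Definition is_monoid_hom (G : group) (X : Type) (pi : seq X -> G) : Prop :=
  pi [::] = gone G /\ forall u v : seq X, pi (u ++ v) = gmul (pi u) (pi v).

Definition finite_generating_set (G : group) (X : finType) (pi : seq X -> G) : Prop :=
  is_monoid_hom pi /\ forall g : G, exists w : seq X, pi w = g.

Definition finitely_generated (G : group) : Prop :=
  exists (X : finType) (pi : seq X -> G), finite_generating_set pi.

Record dfa (X : finType) := DFA {
  dstate : finType;
  dstart : dstate;
  dtrans : dstate -> X -> dstate;
  dfinal : pred dstate
}.

Definition dfa_accepts (X : finType) (A : dfa X) (w : seq X) : bool :=
  @dfinal X A (foldl (@dtrans X A) (@dstart X A) w).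

Definition regular_language (X : finType) (L : seq X -> Prop) : Prop :=
  exists A : dfa X, forall w, L w <-> dfa_accepts A w.

Definition left_order (G : group) (lt : G -> G -> Prop) : Prop :=
  [/\ (forall x, ~ lt x x),
      (forall x y z, lt x y -> lt y z -> lt x z),
      (forall x y, x <> y -> lt x y \/ lt y x) &
      (forall g x y, lt x y -> lt (gmul g x) (gmul g y))].

Definition positive_cone (G : group) (lt : G -> G -> Prop) : G -> Prop :=
  fun g => lt (gone G) g.

Definition regular_preimage_left_order (G : group) (lt : G -> G -> Prop) : Prop :=
  left_order lt /\
  exists (X : finType) (pi : seq X -> G),
    finite_generating_set pi /\
    regular_language (fun w => positive_cone lt (pi w)).

(* Main.v *)
From Stdlib Require Import Classical.
Require Import Defs.
From mathcomp Require Import all_boot.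
Set Implicit Arguments.

Section Aux.
Variable G : group.

Lemma gmulgV_ (x : G) : gmul x (ginv x) = gone G.
Proof.
rewrite -{1}(gmul1g (gmul x (ginv x))) -{1}(gmulVg (ginv x)) -gmulA.
by rewrite (gmulA (ginv x) x) gmulVg gmul1g gmulVg.
Qed.

Lemma gmulg1_ (x : G) : gmul x (gone G) = x.
Proof. by rewrite -(gmulVg x) gmulA gmulgV_ gmul1g. Qed.
End Aux.

Definition rep (X : Type) (w : seq X) n := iter n (cat w) [::].

Lemma repD (X : Type) (w : seq X) n m : rep w (n + m) = rep w n ++ rep w m.
Proof. by elim: n => //= n IH; rewrite /rep /= -/(rep w _) IH catA. Qed.

Lemma repSr (X : Type) (w : seq X) n : rep w n.+1 = rep w n ++ w.
Proof. by rewrite -addn1 repD /rep /= cats0. Qed.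

Theorem propositionA4 (G : group) :
  finitely_generated G ->
  ((exists lt : G -> G -> Prop, regular_preimage_left_order lt) <->
   (forall g : G, g = gone G)).
Proof.
move=> [X [pi Hfg]]; split.
- move=> [lt [[Hirr Htr Htot Hinv] [Y [p [[[p0 pD] psurj] [A HA]]]]]] g.
  apply: NNPP => Hne.
  have [h Hh] : exists h, lt (gone G) h.
    case: (Htot g (gone G) Hne) => H; last by exists g.
    exists (ginv g); have := Hinv (ginv g) _ _ H.
    by rewrite gmulVg gmulg1_.
  have [w Hw] := psurj h.
  have [w' Hw'] := psurj (ginv h).
  have Hone a : p (rep w' a ++ rep w a) = gone G.
    elim: a => [|a IH]; first by rewrite /= p0.
    rewrite [rep w a.+1]repSr -[rep w' a.+1]/(w' ++ rep w' a) -catA (catA (rep w' a)) pD pD IH.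
    by rewrite gmul1g Hw' Hw gmulVg.
  have Hpos d : lt (gone G) (p (rep w d.+1)).
    elim: d => [|d IH]; first by rewrite /rep /= cats0 Hw.
    rewrite repSr pD Hw; apply: Htr IH _.
    by have := Hinv (p (rep w d.+1)) _ _ Hh; rewrite gmulg1_.
  pose f (a : 'I_#|dstate A|.+1) :=
    foldl (@dtrans Y A) (@dstart Y A) (rep w' a).
  have key (a1 a2 : 'I_#|dstate A|.+1) : a1 < a2 -> f a1 = f a2 -> False.
    move=> lt12 Hf.
    have E1 := HA (rep w' a1 ++ rep w a2).
    have E2 := HA (rep w' a2 ++ rep w a2).
    move: E1 E2; rewrite /dfa_accepts !foldl_cat -/(f a1) -/(f a2) Hf.
    move=> [E1 _] [_ E2].
    apply: (Hirr (gone G)).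
    have := E2 (E1 _); rewrite /positive_cone Hone; apply.
    rewrite -(subnKC (ltnW lt12)) repD catA pD Hone gmul1g.
    by rewrite -(subnSK lt12); apply: Hpos.
  have inj : injective f.
    move=> a1 a2 Hf; apply: val_inj; case: (ltngtP a1 a2) => // H; exfalso.
    + exact: (key _ _ H Hf).
    + exact: (key _ _ H (esym Hf)).
  by have := leq_card f inj; rewrite card_ord ltnn.
- move=> Htriv; exists (fun _ _ => False); split.
    split; [by move=> x [] | by move=> x y z [] | | by move=> g x y []].
    move=> x y Hxy; exfalso; apply: Hxy.
    by rewrite (Htriv x) (Htriv y).
  exists X, pi; split => //.
  exists (@DFA X unit tt (fun _ _ => tt) (fun _ => false)).
  by move=> w; split.
Qed.
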